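(* Let $A\in\mathbb{R}^{nm\times nm}$, $x=\operatorname{vec}(X)\in S^{nm-1}\cap\mathcal{M}_r$, $\mathfrak{R}(x)=x^\top Ax$ and $P=\mathrm{P}_{T_X\mathcal{M}_r}$. Suppose $\xi\in\mathbb{R}^{nm}$ satisfies $P\xi=\xi$, $x^\top\xi=0$ and \[ (I-xx^\top)\,P\,(A-\mathfrak{R}(x)I)\,P\,(I-xx^\top)\,\xi=-P(I-xx^\top)Ax. \] Then $\tilde x=x+\xi$ satisfies $P\tilde x=\tilde x$ and \[ P\,(A-\mathfrak{R}(x)I)\,P\,\tilde x=\alpha\, x,\qquad \alpha=x^\top P(A-\mathfrak{R}(x)I)P\xi . \] In particular, if $\alpha\neq0$, then $\tilde x/\alpha$ solves the low-rank Rayleigh quotient iteration system $P(A-\mathfrak{R}(x)I)P\,y=x$, $Py=y$, and $R(\tilde x/\alpha)=R(\tilde x)$ for the normalized retraction $R$ (whenever it is scale invariant, e.g. $R(y)=\mathrm{P}_{\mathcal{M}_r}(y)/\|\mathrm{P}_{\mathcal{M}_r}(y)\|$ with $\alpha>0$).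
   Context: $\operatorname{vec}$ is columnwise reshaping, $S^{nm-1}$ the unit sphere of $\mathbb{R}^{nm}$, $\mathcal{M}_r$ the manifold of (vectorized) $n\times m$ matrices of rank exactly $r$. With thin SVD $X=USV^\top$ ($U^\top U=I_r$, $V^\top V=I_r$), $\mathrm{P}_{T_X\mathcal{M}_r}=VV^\top\otimes UU^\top+VV^\top\otimes(I_n-UU^\top)+(I_m-VV^\top)\otimes UU^\top$ is the orthogonal projection onto the tangent space of $\mathcal{M}_r$ at $X$; note $Px=x$. $\mathrm{P}_{\mathcal{M}_r}(y)$ denotes a best approximation of $y$ in $\mathcal{M}_r$ in the Euclidean norm. *)

(* Defs.v *)
From HB Require Import structures.
From mathcomp Require Import all_boot all_order all_algebra.
Set Implicit Arguments. Unset Strict Implicit. Unset Printing Implicit Defensive.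
Import Order.TTheory GRing.Theory Num.Theory.
Local Open Scope ring_scope.

(* Column-wise vectorization of an n x m matrix: entry X i j sits at the
   index mxvec_index j i, i.e. at position j*n + i (column-major). *)
Definition vec (R : Type) (n m : nat) (X : 'M[R]_(n, m)) : 'cV[R]_(m * n) :=
  (mxvec X^T)^T.

(* Kronecker product B (x) C, with the index convention matching [vec]:
   (B (x) C) vec X = vec (C X B^T). Row index k corresponds to the pair
   (j, i) = enum_val k, i.e. position j * n1 + i. *)
Definition kron (R : pzRingType) (m1 m2 n1 n2 : nat)
  (B : 'M[R]_(m1, m2)) (C : 'M[R]_(n1, n2)) : 'M[R]_(m1 * n1, m2 * n2) :=
  \matrix_(k, l)
    (let p := enum_val (cast_ord (esym (mxvec_cast m1 n1)) k) in
     let q := enum_val (cast_ord (esym (mxvec_cast m2 n2)) l) in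
     B p.1 q.1 * C p.2 q.2).

(* Orthogonal projection onto the tangent space of M_r at X = U S V^T:
   VV^T (x) UU^T + VV^T (x) (I - UU^T) + (I - VV^T) (x) UU^T. *)
Definition tangentProj (R : pzRingType) (n m r : nat)
  (U : 'M[R]_(n, r)) (V : 'M[R]_(m, r)) : 'M[R]_(m * n) :=
  kron (V *m V^T) (U *m U^T)
  + kron (V *m V^T) (1%:M - U *m U^T)
  + kron (1%:M - V *m V^T) (U *m U^T).

Definition rayleigh (R : pzRingType) (N : nat) (A : 'M[R]_N) (x : 'cV[R]_N) : R :=
  (x^T *m A *m x) 0 0.

(* Main.v *)
Require Import Defs.
From HB Require Import structures.
From mathcomp Require Import all_boot all_order all_algebra.
Import Order.TTheory GRing.Theory Num.Theory.
Local Open Scope ring_scope.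

Lemma kron_vec (R : realFieldType) m1 m2 n1 n2 (B : 'M[R]_(m1, m2)) (C : 'M[R]_(n1, n2))
  (Y : 'M[R]_(n2, m2)) : kron B C *m vec Y = vec (C *m Y *m B^T).
Proof.
apply/matrixP => k z; rewrite {z}ord1.
case/mxvec_indexP: k => j i.
rewrite /vec !mxE mxvecE mxE.
rewrite (reindex _ (curry_mxvec_bij _ _)) /=.
rewrite [RHS]mxE.
rewrite [RHS](eq_bigr (fun q1 => \sum_q2 C i q2 * Y q2 q1 * B j q1)); last first.
  by move=> q1 _; rewrite !mxE mulr_suml; apply: eq_bigr => q2 _; rewrite ?mxE.
rewrite pair_bigA /=; apply: eq_bigr => [[q1 q2]] _ /=.
rewrite !mxE mxvecE mxE /mxvec_index !cast_ordK !enum_rankK /=.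
by rewrite [RHS]mulrC mulrA.
Qed.

Lemma vec_add (R : pzRingType) n m (X Y : 'M[R]_(n, m)) : vec (X + Y) = vec X + vec Y.
Proof. by rewrite /vec linearD /= linearD /= linearD. Qed.

Lemma vec0 (R : pzRingType) n m : vec (0 : 'M[R]_(n, m)) = 0.
Proof. by rewrite /vec !linear0. Qed.

Theorem mainTheorem5 (R : realFieldType) (n m r : nat)
  (A : 'M[R]_(m * n)) (X : 'M[R]_(n, m))
  (U : 'M[R]_(n, r)) (S : 'M[R]_r) (V : 'M[R]_(m, r))
  (xi : 'cV[R]_(m * n)) :
  U^T *m U = 1%:M -> V^T *m V = 1%:M ->
  is_diag_mx S -> (forall i, 0 < S i i) ->
  X = U *m S *m V^T ->
  \rank X = r ->
  (vec X)^T *m vec X = 1%:M ->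
  let x := vec X in
  let P := tangentProj U V in
  let Rx := rayleigh A x in
  let Id := (1%:M : 'M[R]_(m * n)) in
  P *m xi = xi ->
  x^T *m xi = 0 ->
  (Id - x *m x^T) *m P *m (A - Rx%:M) *m P *m (Id - x *m x^T) *m xi
    = - (P *m (Id - x *m x^T) *m A *m x) ->
  let xt := x + xi in
  let alpha := (x^T *m P *m (A - Rx%:M) *m P *m xi) 0 0 in
  [/\ P *m xt = xt,
      P *m (A - Rx%:M) *m P *m xt = alpha *: x,
      alpha != 0 ->
        P *m (A - Rx%:M) *m P *m (alpha^-1 *: xt) = x
        /\ P *m (alpha^-1 *: xt) = alpha^-1 *: xt
    & forall Ret : 'cV[R]_(m * n) -> 'cV[R]_(m * n),
        (forall (c : R) (y : 'cV[R]_(m * n)), 0 < c -> Ret (c *: y) = Ret y) ->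
        0 < alpha -> Ret (alpha^-1 *: xt) = Ret xt].
Proof.
move=> hU hV _ _ hX _ _ x P Rx Id hPxi hxxi hEq xt alpha.
have hUX : U *m U^T *m X = X.
  by rewrite hX !mulmxA -(mulmxA U) hU mulmx1.
have hXV : X *m (V *m V^T)^T = X.
  by rewrite trmx_mul trmxK hX -!mulmxA (mulmxA V^T) hV mul1mx.
have hXV' : X *m (1%:M - V *m V^T)^T = 0.
  by rewrite linearB /= trmx1 mulmxBr mulmx1 hXV subrr.
have hPx : P *m x = x.
  rewrite /P /tangentProj /x !mulmxDl !kron_vec.
  change (vec (U *m U^T *m X *m (V *m V^T)^T) + vec ((1%:M - U *m U^T) *m X *m (V *m V^T)^T)
    + vec (U *m U^T *m X *m (1%:M - V *m V^T)^T) = vec X).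
  rewrite hUX hXV.

  rewrite mulmxBl mul1mx hUX subrr mul0mx hXV' vec0.
  by rewrite !addr0.
have hPxt : P *m xt = xt by rewrite /xt mulmxDr hPx hPxi.
set M := P *m (A - Rx%:M) *m P.
have hQxi : (Id - x *m x^T) *m xi = xi.
  by rewrite mulmxBl mul1mx -mulmxA hxxi mulmx0 subr0.
have hEq' : (Id - x *m x^T) *m (M *m xi) = - (P *m (A *m x) - Rx *: x).
  rewrite -[in LHS]hQxi /M !mulmxA hEq; congr (- _).
  rewrite -!mulmxA mulmxBl mul1mx mulmxBr; congr (_ - _).
  rewrite -mulmxA (mulmxA x^T) [x^T *m A *m x]mx11_scalar mul_mx_scalar.
  by rewrite -scalemxAr hPx.
have hMxi : M *m xi = alpha *: x - (P *m (A *m x) - Rx *: x).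
  rewrite -hEq' mulmxBl mul1mx -[x *m x^T *m _]mulmxA.
  have -> : x^T *m (M *m xi) = alpha%:M.
    by rewrite [LHS]mx11_scalar /alpha /M !mulmxA.
  by rewrite mul_mx_scalar addrC subrK.
have hMx : M *m x = P *m (A *m x) - Rx *: x.
  rewrite /M -mulmxA hPx -mulmxA mulmxBl mulmxBr mul_scalar_mx -scalemxAr hPx.
  by [].
have hMxt : M *m xt = alpha *: x.
  by rewrite /xt mulmxDr hMx hMxi addrC subrK.
split => //.
- move=> ha; rewrite -!scalemxAr hMxt hPxt scalerA mulVf // scale1r; split=> //.
- by move=> Ret hRet ha; apply: hRet; rewrite invr_gt0.
Qed.
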